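(* If $M\to_{\beta\mu}N$ and $\Gamma\vdash M:\delta\mid\Delta$ is derivable in the intersection type assignment system, then $\Gamma\vdash N:\delta\mid\Delta$ is derivable.
   Context: $\lambda\mu$ terms and commands: $M::=x\mid\lambda x.M\mid MN\mid\mu\alpha.\mathsf C$ and $\mathsf C::=[\alpha]M$. Structural substitution $T[\alpha\Leftarrow L]$ replaces, recursively, every subterm $[\alpha]N$ by $[\alpha](N[\alpha\Leftarrow L])L$. $\to_{\beta\mu}$ is the compatible closure of: - $(\lambda x.M)N\to M[N/x]$; - $(\mu\alpha.\mathsf C)N\to\mu\alpha.\mathsf C[\alpha\Leftarrow N]$; - $[\alpha]\mu\beta.\mathsf C\to\mathsf C[\alpha/\beta]$. Types (for a fixed $\omega$-algebraic lattice $R$): - $\Lambda_R$: $\rho::=\psi_a\mid\omega\mid\rho\wedge\rho$; - $\Lambda_D$: $\delta::=\rho\mid\kappa\to\rho\mid\omega\mid\delta\wedge\delta$; - $\Lambda_C$: $\kappa::=\delta\times\kappa\mid\omega\mid\kappa\wedge\kappa$. The relations $\le_R,\le_D,\le_C$ are the least reflexive, transitive relations with $\sigma\wedge\tau\le\sigma,\tau$, $\sigma\le\omega$, $\rho\le\sigma,\tau\Rightarrow\rho\le\sigma\wedge\tau$, and additionally: - $\psi_\bot\sim\omega$ and $\psi_{a\sqcup b}\sim\psi_a\wedge\psi_b$; - $\le_R\subseteq\le_D$; - $\omega\le_D\omega\to\omega$; - $\psi_a\le_D\omega\to\psi_a\le_D\psi_a$; - $\omega\le_C\omega\times\omega$;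 - $(\kappa\to\rho_1)\wedge(\kappa\to\rho_2)\le_D\kappa\to(\rho_1\wedge\rho_2)$; - $(\delta_1\times\kappa_1)\wedge(\delta_2\times\kappa_2)\le_C(\delta_1\wedge\delta_2)\times(\kappa_1\wedge\kappa_2)$; - $\to$ is contravariant in $\Lambda_C$ and covariant in $\Lambda_R$; - $\times$ is covariant in both arguments. Type assignment. Bases $\Gamma$ are finite maps from variables to $\Lambda_D$, and contexts $\Delta$ are finite maps from names to $\Lambda_C$. $\Gamma(x)$ and $\Delta(\alpha)$ are $\omega$ outside the domain. The rules are: - (Ax) $\Gamma,x{:}\delta\vdash x:\delta\mid\Delta$. - (Abs) From $\Gamma\vdash M:\kappa\to\rho\mid\Delta$, $\Gamma(x)=\delta$, infer $\Gamma\setminus x\vdash\lambda x.M:(\delta\times\kappa)\to\rho\mid\Delta$. - (App) From $\Gamma\vdash M:(\delta\times\kappa)\to\rho\mid\Delta$ and $\Gamma\vdash N:\delta\mid\Delta$, infer $\Gamma\vdash MN:\kappa\to\rho\mid\Delta$. - (Cmd) From $\Gamma\vdash M:\delta\mid\Delta$, $\Delta(\alpha)=\kappa$, infer $\Gamma\vdash[\alpha]M:\delta\times\kappa\mid\Delta$. - ($\mu$) From $\Gamma\vdash\mathsf C:(\kappa'\to\rho)\times\kappa'\mid\Delta$, $\Delta(\alpha)=\kappa$, infer $\Gamma\vdash\mu\alpha.\mathsf C:\kappa\to\rho\mid\Delta\setminus\alpha$. - ($\wedge$), ($\omega$) and ($\le$). *)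

(* Defs.v *)
(* Intersection types for the lambda-mu calculus
   (van Bakel, Barbanera, de'Liguoro).  Terms use de Bruijn indices,
   both for term variables and for mu-names. *)
From Stdlib Require Import Arith.

Record complete_lattice := CompleteLattice {
  car :> Type;
  lle : car -> car -> Prop;
  lle_refl : forall x, lle x x;
  lle_trans : forall x y z, lle x y -> lle y z -> lle x z;
  lle_antisym : forall x y, lle x y -> lle y x -> x = y;
  lsup : (car -> Prop) -> car;
  lsup_ub : forall (S : car -> Prop) x, S x -> lle x (lsup S);
  lsup_least : forall (S : car -> Prop) y,
      (forall x, S x -> lle x y) -> lle (lsup S) y
}.

Definition directed (L : complete_lattice) (D : L -> Prop) : Prop :=
  (exists d, D d) /\
  (forall x y, D x -> D y -> exists z, D z /\ lle L x z /\ lle L y z).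

Definition compact (L : complete_lattice) (c : L) : Prop :=
  forall D : L -> Prop, directed L D -> lle L c (lsup L D) ->
    exists d, D d /\ lle L c d.

Definition omega_algebraic (L : complete_lattice) : Prop :=
  (forall x : L, x = lsup L (fun c => compact L c /\ lle L c x)) /\
  (exists f : nat -> L, forall c, compact L c -> exists n, f n = c).

Definition lbot (L : complete_lattice) : L := lsup L (fun _ => False).
Definition ljoin (L : complete_lattice) (a b : L) : L :=
  lsup L (fun x => x = a \/ x = b).

Definition cpt (L : complete_lattice) := { c : L | compact L c }.

Inductive rtype (L : complete_lattice) : Type :=
| Psi : cpt L -> rtype L
| OmR : rtype L
| AndR : rtype L -> rtype L -> rtype L.

(* Lambda_D and Lambda_C.  Lambda_R is included in Lambda_D via [embR]
   below (psi_a, omega and /\ of Lambda_R are literally those of Lambda_D). *)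
Inductive dtype (L : complete_lattice) : Type :=
| DPsi : cpt L -> dtype L
| DArr : ctype L -> rtype L -> dtype L
| OmD : dtype L
| AndD : dtype L -> dtype L -> dtype L
with ctype (L : complete_lattice) : Type :=
| Prod : dtype L -> ctype L -> ctype L
| OmC : ctype L
| AndC : ctype L -> ctype L -> ctype L.

Arguments Psi {L}. Arguments OmR {L}. Arguments AndR {L}.
Arguments DPsi {L}. Arguments DArr {L}. Arguments OmD {L}. Arguments AndD {L}.
Arguments Prod {L}. Arguments OmC {L}. Arguments AndC {L}.

Fixpoint embR {L : complete_lattice} (r : rtype L) : dtype L :=
  match r with
  | Psi a => DPsi a
  | OmR => OmD
  | AndR r1 r2 => AndD (embR r1) (embR r2)
  end.

Inductive leR (L : complete_lattice) : rtype L -> rtype L -> Prop :=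
| leR_refl : forall r, leR L r r
| leR_trans : forall r s t, leR L r s -> leR L s t -> leR L r t
| leR_andl : forall r s, leR L (AndR r s) r
| leR_andr : forall r s, leR L (AndR r s) s
| leR_om : forall r, leR L r OmR
| leR_glb : forall r s t, leR L r s -> leR L r t -> leR L r (AndR s t)
| leR_bot1 : forall a : cpt L, proj1_sig a = lbot L -> leR L (Psi a) OmR
| leR_bot2 : forall a : cpt L, proj1_sig a = lbot L -> leR L OmR (Psi a)
| leR_join1 : forall a b c : cpt L,
    proj1_sig c = ljoin L (proj1_sig a) (proj1_sig b) ->
    leR L (Psi c) (AndR (Psi a) (Psi b))
| leR_join2 : forall a b c : cpt L,
    proj1_sig c = ljoin L (proj1_sig a) (proj1_sig b) ->
    leR L (AndR (Psi a) (Psi b)) (Psi c).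

Inductive leD (L : complete_lattice) : dtype L -> dtype L -> Prop :=
| leD_refl : forall d, leD L d d
| leD_trans : forall d e f, leD L d e -> leD L e f -> leD L d f
| leD_andl : forall d e, leD L (AndD d e) d
| leD_andr : forall d e, leD L (AndD d e) e
| leD_om : forall d, leD L d OmD
| leD_glb : forall d e f, leD L d e -> leD L d f -> leD L d (AndD e f)
| leD_R : forall r s, leR L r s -> leD L (embR r) (embR s)
| leD_omarr : leD L OmD (DArr OmC OmR)
| leD_psiarr1 : forall a, leD L (DPsi a) (DArr OmC (Psi a))
| leD_psiarr2 : forall a, leD L (DArr OmC (Psi a)) (DPsi a)
| leD_arrand : forall k r1 r2,
    leD L (AndD (DArr k r1) (DArr k r2)) (DArr k (AndR r1 r2))
| leD_arr : forall k k' r r', leC L k' k -> leR L r r' ->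
    leD L (DArr k r) (DArr k' r')
with leC (L : complete_lattice) : ctype L -> ctype L -> Prop :=
| leC_refl : forall k, leC L k k
| leC_trans : forall k l m, leC L k l -> leC L l m -> leC L k m
| leC_andl : forall k l, leC L (AndC k l) k
| leC_andr : forall k l, leC L (AndC k l) l
| leC_om : forall k, leC L k OmC
| leC_glb : forall k l m, leC L k l -> leC L k m -> leC L k (AndC l m)
| leC_omprod : leC L OmC (Prod OmD OmC)
| leC_prodand : forall d1 d2 k1 k2,
    leC L (AndC (Prod d1 k1) (Prod d2 k2)) (Prod (AndD d1 d2) (AndC k1 k2))
| leC_prod : forall d d' k k', leD L d d' -> leC L k k' ->
    leC L (Prod d k) (Prod d' k').

Inductive term : Type :=
| Var : nat -> term
| Lam : term -> term
| App : term -> term -> term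
| Mu : cmd -> term                   (* binds name 0 *)
with cmd : Type :=
| Cmd : nat -> term -> cmd.

Fixpoint lift_t (c : nat) (M : term) : term :=
  match M with
  | Var n => if n <? c then Var n else Var (S n)
  | Lam M => Lam (lift_t (S c) M)
  | App M N => App (lift_t c M) (lift_t c N)
  | Mu C => Mu (lift_c c C)
  end
with lift_c (c : nat) (C : cmd) : cmd :=
  match C with Cmd a M => Cmd a (lift_t c M) end.

Fixpoint liftn_t (c : nat) (M : term) : term :=
  match M with
  | Var n => Var n
  | Lam M => Lam (liftn_t c M)
  | App M N => App (liftn_t c M) (liftn_t c N)
  | Mu C => Mu (liftn_c (S c) C)
  end
with liftn_c (c : nat) (C : cmd) : cmd :=
  match C with Cmd a M => Cmd (if a <? c then a else S a) (liftn_t c M) end.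

(* M[N/k] : substitute N for term variable k, lowering variables > k *)
Fixpoint subst_t (k : nat) (N : term) (M : term) : term :=
  match M with
  | Var n => if n <? k then Var n else if n =? k then N else Var (pred n)
  | Lam M => Lam (subst_t (S k) (lift_t 0 N) M)
  | App M1 M2 => App (subst_t k N M1) (subst_t k N M2)
  | Mu C => Mu (subst_c k (liftn_t 0 N) C)
  end
with subst_c (k : nat) (N : term) (C : cmd) : cmd :=
  match C with Cmd a M => Cmd a (subst_t k N M) end.

Fixpoint ssubst_t (k : nat) (L : term) (M : term) : term :=
  match M with
  | Var n => Var n
  | Lam M => Lam (ssubst_t k (lift_t 0 L) M)
  | App M1 M2 => App (ssubst_t k L M1) (ssubst_t k L M2)
  | Mu C => Mu (ssubst_c (S k) (liftn_t 0 L) C)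
  end
with ssubst_c (k : nat) (L : term) (C : cmd) : cmd :=
  match C with
  | Cmd a M => if a =? k then Cmd a (App (ssubst_t k L M) L)
               else Cmd a (ssubst_t k L M)
  end.

(* renaming T[a/k] of name k by name a, lowering names > k *)
Fixpoint ren_t (k a : nat) (M : term) : term :=
  match M with
  | Var n => Var n
  | Lam M => Lam (ren_t k a M)
  | App M1 M2 => App (ren_t k a M1) (ren_t k a M2)
  | Mu C => Mu (ren_c (S k) (S a) C)
  end
with ren_c (k a : nat) (C : cmd) : cmd :=
  match C with
  | Cmd b M => Cmd (if b <? k then b else if b =? k then a else pred b)
                   (ren_t k a M)
  end.

Inductive red_t : term -> term -> Prop :=
| r_beta : forall M N, red_t (App (Lam M) N) (subst_t 0 N M)
| r_mu : forall C N, red_t (App (Mu C) N) (Mu (ssubst_c 0 (liftn_t 0 N) C))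
| r_lam : forall M M', red_t M M' -> red_t (Lam M) (Lam M')
| r_appl : forall M M' N, red_t M M' -> red_t (App M N) (App M' N)
| r_appr : forall M N N', red_t N N' -> red_t (App M N) (App M N')
| r_muc : forall C C', red_c C C' -> red_t (Mu C) (Mu C')
with red_c : cmd -> cmd -> Prop :=
| r_ren : forall a C, red_c (Cmd a (Mu C)) (ren_c 0 a C)
| r_cmd : forall a M M', red_t M M' -> red_c (Cmd a M) (Cmd a M').

(* bases: total maps, omega outside the (finite) domain *)
Definition basis (L : complete_lattice) := nat -> dtype L.
Definition context (L : complete_lattice) := nat -> ctype L.

Definition scons {A : Type} (x : A) (f : nat -> A) : nat -> A :=
  fun n => match n with 0 => x | S n => f n end.

Definition finite_basis {L : complete_lattice} (G : basis L) : Prop :=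
  exists m, forall n, m <= n -> G n = OmD.
Definition finite_context {L : complete_lattice} (D : context L) : Prop :=
  exists m, forall n, m <= n -> D n = OmC.

Inductive typ_t (L : complete_lattice)
  : basis L -> term -> dtype L -> context L -> Prop :=
| t_ax : forall G D x, typ_t L G (Var x) (G x) D
| t_abs : forall G D d k r M,
    typ_t L (scons d G) M (DArr k r) D ->
    typ_t L G (Lam M) (DArr (Prod d k) r) D
| t_app : forall G D d k r M N,
    typ_t L G M (DArr (Prod d k) r) D ->
    typ_t L G N d D ->
    typ_t L G (App M N) (DArr k r) D
| t_mu : forall G D k k' r C,
    typ_c L G C (Prod (DArr k' r) k') (scons k D) ->
    typ_t L G (Mu C) (DArr k r) D
| t_and : forall G D M d e,
    typ_t L G M d D -> typ_t L G M e D -> typ_t L G M (AndD d e) D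
| t_om : forall G D M, typ_t L G M OmD D
| t_le : forall G D M d e, typ_t L G M d D -> leD L d e -> typ_t L G M e D
with typ_c (L : complete_lattice)
  : basis L -> cmd -> ctype L -> context L -> Prop :=
| t_cmd : forall G D a M d,
    typ_t L G M d D -> typ_c L G (Cmd a M) (Prod d (D a)) D
| tc_and : forall G D C k l,
    typ_c L G C k D -> typ_c L G C l D -> typ_c L G C (AndC k l) D
| tc_om : forall G D C, typ_c L G C OmC D
| tc_le : forall G D C k l, typ_c L G C k D -> leC L k l -> typ_c L G C l D.

(* Main.v *)
Require Import Defs.
From Stdlib Require Import Arith Lia.

Local Arguments leR {L}. Local Arguments leD {L}. Local Arguments leC {L}.
Local Arguments typ_t {L}. Local Arguments typ_c {L}.

Lemma leR_and_mono {Lt : complete_lattice} (r1 r2 s1 s2 : rtype Lt) :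
  leR r1 s1 -> leR r2 s2 -> leR (AndR r1 r2) (AndR s1 s2).
Proof.
  intros. apply leR_glb; eapply leR_trans; [apply leR_andl| |apply leR_andr|]; auto.
Qed.

Inductive Arr {Lt : complete_lattice} : dtype Lt -> ctype Lt -> rtype Lt -> Prop :=
| A_psi : forall a c, Arr (DPsi a) c (Psi a)
| A_arr : forall k r c, leC c k -> Arr (DArr k r) c r
| A_om : forall d c, Arr d c OmR
| A_and : forall d e c r1 r2, Arr d c r1 -> Arr e c r2 -> Arr (AndD d e) c (AndR r1 r2)
| A_meet : forall d c r1 r2, Arr d c r1 -> Arr d c r2 -> Arr d c (AndR r1 r2).

Definition PA {Lt : complete_lattice} (d : dtype Lt) c rho :=
  exists r, Arr d c r /\ leR r rho.

Lemma Arr_om_inv {Lt : complete_lattice} (c : ctype Lt) r :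
  Arr OmD c r -> leR OmR r.
Proof.
  remember OmD as x. induction 1; subst; try discriminate.
  - apply leR_refl.
  - apply leR_glb; auto.
Qed.

Lemma Arr_psi_inv {Lt : complete_lattice} a (c : ctype Lt) r :
  Arr (DPsi a) c r -> leR (Psi a) r.
Proof.
  remember (DPsi a) as x. induction 1; subst; try discriminate.
  - inversion Heqx; subst; apply leR_refl.
  - apply leR_om.
  - apply leR_glb; auto.
Qed.

Lemma Arr_arr_inv {Lt : complete_lattice} k r0 (c : ctype Lt) r :
  Arr (DArr k r0) c r -> (leC c k /\ leR r0 r) \/ leR OmR r.
Proof.
  remember (DArr k r0) as x. induction 1; subst; try discriminate.
  - inversion Heqx; subst. left; split; auto. apply leR_refl.
  - right; apply leR_refl.
  - destruct (IHArr1 eq_refl) as [[? ?]|?]; destruct (IHArr2 eq_refl) as [[? ?]|?].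
    + left; split; auto. apply leR_glb; auto.
    + left; split; auto. apply leR_glb; auto. eapply leR_trans; [apply leR_om|]; auto.
    + left; split; auto. apply leR_glb; auto. eapply leR_trans; [apply leR_om|]; auto.
    + right. apply leR_glb; auto.
Qed.

Lemma Arr_and_inv {Lt : complete_lattice} d1 d2 (c : ctype Lt) r :
  Arr (AndD d1 d2) c r -> leR OmR r \/
    exists r1 r2, Arr d1 c r1 /\ Arr d2 c r2 /\ leR (AndR r1 r2) r.
Proof.
  remember (AndD d1 d2) as x. induction 1; subst; try discriminate.
  - left; apply leR_refl.
  - inversion Heqx; subst. right. exists r1, r2. repeat split; auto. apply leR_refl.
  - destruct (IHArr1 eq_refl) as [?|[a1 [a2 [? [? ?]]]]];
    destruct (IHArr2 eq_refl) as [?|[b1 [b2 [? [? ?]]]]].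
    + left; apply leR_glb; auto.
    + right. exists b1, b2. repeat split; auto. apply leR_glb; auto.
      eapply leR_trans; [apply leR_om|]; auto.
    + right. exists a1, a2. repeat split; auto. apply leR_glb; auto.
      eapply leR_trans; [apply leR_om|]; auto.
    + right. exists (AndR a1 b1), (AndR a2 b2). repeat split; try (apply A_meet; auto).
      apply leR_glb.
      * eapply leR_trans; [|eauto]. apply leR_and_mono; apply leR_andl.
      * eapply leR_trans; [|eauto]. apply leR_and_mono; apply leR_andr.
Qed.

Lemma Arr_embR {Lt : complete_lattice} (r : rtype Lt) c : Arr (embR r) c r.
Proof. induction r; simpl; constructor; auto. Qed.

Lemma Arr_embR_inv {Lt : complete_lattice} (s : rtype Lt) c r :
  Arr (embR s) c r -> leR s r.
Proof.
  revert r. induction s; intros r H; simpl in H.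
  - apply Arr_psi_inv in H. auto.
  - apply Arr_om_inv in H. auto.
  - apply Arr_and_inv in H. destruct H as [H|[r1 [r2 [H1 [H2 H3]]]]].
    + eapply leR_trans; [apply leR_om|]; auto.
    + eapply leR_trans; [|eauto]. apply leR_and_mono; auto.
Qed.

Lemma leD_inv {Lt : complete_lattice} (d e : dtype Lt) :
  leD d e -> forall c rho, PA e c rho -> PA d c rho.
Proof.
  induction 1; intros c rho [x [Hx Hle]].
  - exists x; auto.
  - apply IHleD1, IHleD2. exists x; auto.
  - exists (AndR x OmR). split. constructor; auto; constructor.
    eapply leR_trans; [apply leR_andl|]; auto.
  - exists (AndR OmR x). split. constructor; auto; constructor.
    eapply leR_trans; [apply leR_andr|]; auto.
  - apply Arr_om_inv in Hx. exists OmR. split. constructor. eapply leR_trans; eauto.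
  - apply Arr_and_inv in Hx. destruct Hx as [H1|[r1 [r2 [H1 [H2 H3]]]]].
    + exists OmR. split. constructor. eapply leR_trans; eauto.
    + destruct (IHleD1 c r1 (ex_intro _ r1 (conj H1 (leR_refl _ _)))) as [s1 [? ?]].
      destruct (IHleD2 c r2 (ex_intro _ r2 (conj H2 (leR_refl _ _)))) as [s2 [? ?]].
      exists (AndR s1 s2). split. apply A_meet; auto.
      eapply leR_trans; [|eauto]. eapply leR_trans; [|eauto].
      apply leR_and_mono; auto.
  - exists r. split. apply Arr_embR. eapply leR_trans; [eauto|].
    eapply leR_trans; [|eauto]. eapply Arr_embR_inv; eauto.
  - apply Arr_arr_inv in Hx. exists OmR. split. constructor.
    destruct Hx as [[? ?]|?]; eapply leR_trans; eauto.
  - apply Arr_arr_inv in Hx. destruct Hx as [[? ?]|?].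
    + exists (Psi a). split. constructor. eapply leR_trans; eauto.
    + exists OmR. split. constructor. eapply leR_trans; eauto.
  - apply Arr_psi_inv in Hx. exists (Psi a). split. constructor. apply leC_om.
    eapply leR_trans; eauto.
  - apply Arr_arr_inv in Hx. destruct Hx as [[? ?]|?].
    + exists (AndR r1 r2). split. constructor; constructor; auto. eapply leR_trans; eauto.
    + exists OmR. split. constructor. eapply leR_trans; eauto.
  - apply Arr_arr_inv in Hx. destruct Hx as [[? ?]|?].
    + exists r. split. constructor. eapply leC_trans; eauto.
      eapply leR_trans; [eauto|]. eapply leR_trans; eauto.
    + exists OmR. split. constructor. eapply leR_trans; eauto.
Qed.

Lemma leD_arr_inv {Lt : complete_lattice} (d : dtype Lt) c r :
  leD d (DArr c r) -> PA d c r.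
Proof.
  intros H. apply (leD_inv _ _ H). exists r. split. constructor. apply leC_refl. apply leR_refl.
Qed.
Inductive Comp {Lt : complete_lattice} : ctype Lt -> dtype Lt -> ctype Lt -> Prop :=
| C_prod : forall d k, Comp (Prod d k) d k
| C_om : forall l, Comp l OmD OmC
| C_and : forall l1 l2 d1 d2 k1 k2, Comp l1 d1 k1 -> Comp l2 d2 k2 ->
    Comp (AndC l1 l2) (AndD d1 d2) (AndC k1 k2)
| C_meet : forall l d1 d2 k1 k2, Comp l d1 k1 -> Comp l d2 k2 ->
    Comp l (AndD d1 d2) (AndC k1 k2).

Definition PC {Lt : complete_lattice} (l : ctype Lt) d k :=
  exists d' k', Comp l d' k' /\ leD d' d /\ leC k' k.

Lemma Comp_prod_inv {Lt : complete_lattice} (a : dtype Lt) b d k :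
  Comp (Prod a b) d k -> leD a d /\ leC b k.
Proof.
  remember (Prod a b) as x. induction 1; subst; try discriminate.
  - inversion Heqx; subst. split; [apply leD_refl|apply leC_refl].
  - split; [apply leD_om|apply leC_om].
  - destruct (IHComp1 eq_refl), (IHComp2 eq_refl). split; [apply leD_glb|apply leC_glb]; auto.
Qed.

Lemma Comp_om_inv {Lt : complete_lattice} (d : dtype Lt) k :
  Comp OmC d k -> leD OmD d /\ leC OmC k.
Proof.
  remember OmC as x. induction 1; subst; try discriminate.
  - split; [apply leD_refl|apply leC_refl].
  - destruct (IHComp1 eq_refl), (IHComp2 eq_refl). split; [apply leD_glb|apply leC_glb]; auto.
Qed.

Lemma Comp_and_inv {Lt : complete_lattice} (m1 m2 : ctype Lt) d k :
  Comp (AndC m1 m2) d k -> (leD OmD d /\ leC OmC k) \/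
   exists d1 d2 k1 k2, Comp m1 d1 k1 /\ Comp m2 d2 k2 /\ leD (AndD d1 d2) d /\ leC (AndC k1 k2) k.
Proof.
  remember (AndC m1 m2) as x. induction 1; subst; try discriminate.
  - left; split; [apply leD_refl|apply leC_refl].
  - inversion Heqx; subst. right. exists d1, d2, k1, k2. repeat split; auto.
    apply leD_refl. apply leC_refl.
  - destruct (IHComp1 eq_refl) as [[? ?]|[a1 [a2 [b1 [b2 [? [? [? ?]]]]]]]];
    destruct (IHComp2 eq_refl) as [[? ?]|[a1' [a2' [b1' [b2' [? [? [? ?]]]]]]]].
    + left; split; [apply leD_glb|apply leC_glb]; auto.
    + right. exists a1', a2', b1', b2'. repeat split; auto.
      apply leD_glb; auto. eapply leD_trans; [apply leD_om|]; auto.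
      apply leC_glb; auto. eapply leC_trans; [apply leC_om|]; auto.
    + right. exists a1, a2, b1, b2. repeat split; auto.
      apply leD_glb; auto. eapply leD_trans; [apply leD_om|]; auto.
      apply leC_glb; auto. eapply leC_trans; [apply leC_om|]; auto.
    + right. exists (AndD a1 a1'), (AndD a2 a2'), (AndC b1 b1'), (AndC b2 b2').
      repeat split; try (apply C_meet; auto).
      * apply leD_glb.
        -- eapply leD_trans; [|eauto]. apply leD_glb.
           eapply leD_trans; [apply leD_andl|apply leD_andl].
           eapply leD_trans; [apply leD_andr|apply leD_andl].
        -- eapply leD_trans; [|eauto]. apply leD_glb.
           eapply leD_trans; [apply leD_andl|apply leD_andr].
           eapply leD_trans; [apply leD_andr|apply leD_andr].
      * apply leC_glb.
        -- eapply leC_trans; [|eauto]. apply leC_glb.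
           eapply leC_trans; [apply leC_andl|apply leC_andl].
           eapply leC_trans; [apply leC_andr|apply leC_andl].
        -- eapply leC_trans; [|eauto]. apply leC_glb.
           eapply leC_trans; [apply leC_andl|apply leC_andr].
           eapply leC_trans; [apply leC_andr|apply leC_andr].
Qed.

Lemma leC_inv {Lt : complete_lattice} (l m : ctype Lt) :
  leC l m -> forall d k, PC m d k -> PC l d k.
Proof.
  induction 1; intros d0 k0 [x [y [Hc [H1 H2]]]].
  - exists x, y; auto.
  - apply IHleC1, IHleC2. exists x, y; auto.
  - exists (AndD x OmD), (AndC y OmC). repeat split. constructor; auto; constructor.
    eapply leD_trans; [apply leD_andl|]; auto.
    eapply leC_trans; [apply leC_andl|]; auto.
  - exists (AndD OmD x), (AndC OmC y). repeat split. constructor; auto; constructor.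
    eapply leD_trans; [apply leD_andr|]; auto.
    eapply leC_trans; [apply leC_andr|]; auto.
  - apply Comp_om_inv in Hc as [? ?]. exists OmD, OmC. repeat split. constructor.
    eapply leD_trans; eauto. eapply leC_trans; eauto.
  - apply Comp_and_inv in Hc. destruct Hc as [[? ?]|[a1 [a2 [b1 [b2 [? [? [? ?]]]]]]]].
    + exists OmD, OmC. repeat split. constructor.
      eapply leD_trans; eauto. eapply leC_trans; eauto.
    + destruct (IHleC1 a1 b1) as [p1 [q1 [? [? ?]]]].
      { exists a1, b1. repeat split; auto. apply leD_refl. apply leC_refl. }
      destruct (IHleC2 a2 b2) as [p2 [q2 [? [? ?]]]].
      { exists a2, b2. repeat split; auto. apply leD_refl. apply leC_refl. }
      exists (AndD p1 p2), (AndC q1 q2). repeat split. apply C_meet; auto.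
      * eapply leD_trans; [|eauto]. eapply leD_trans; [|eauto]. apply leD_glb.
        eapply leD_trans; [apply leD_andl|]; auto.
        eapply leD_trans; [apply leD_andr|]; auto.
      * eapply leC_trans; [|eauto]. eapply leC_trans; [|eauto]. apply leC_glb.
        eapply leC_trans; [apply leC_andl|]; auto.
        eapply leC_trans; [apply leC_andr|]; auto.
  - apply Comp_prod_inv in Hc as [? ?]. exists OmD, OmC. repeat split. constructor.
    eapply leD_trans; eauto. eapply leC_trans; eauto.
  - apply Comp_prod_inv in Hc as [? ?]. exists (AndD d1 d2), (AndC k1 k2). repeat split.
    constructor; constructor. eapply leD_trans; eauto. eapply leC_trans; eauto.
  - apply Comp_prod_inv in Hc as [? ?]. exists d, k. repeat split. constructor.
    eapply leD_trans; [eauto|]. eapply leD_trans; eauto.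
    eapply leC_trans; [eauto|]. eapply leC_trans; eauto.
Qed.

Lemma leC_prod_inv {Lt : complete_lattice} (a : dtype Lt) b d k :
  leC (Prod a b) (Prod d k) -> leD a d /\ leC b k.
Proof.
  intros H. destruct (leC_inv _ _ H d k) as [x [y [Hc [H1 H2]]]].
  { exists d, k. repeat split. constructor. apply leD_refl. apply leC_refl. }
  apply Comp_prod_inv in Hc as [? ?]. split; [eapply leD_trans|eapply leC_trans]; eauto.
Qed.
Scheme typ_t_mut := Induction for typ_t Sort Prop
  with typ_c_mut := Induction for typ_c Sort Prop.

Definition shift (c n : nat) := if n <? c then n else S n.

Lemma shift_S c n : shift (S c) (S n) = S (shift c n).
Proof. unfold shift. destruct (Nat.ltb_spec n c); destruct (Nat.ltb_spec (S n) (S c)); auto; lia. Qed.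

Lemma typ_lift {Lt : complete_lattice} (G : basis Lt) M e D :
  typ_t G M e D -> forall c G', (forall n, G' (shift c n) = G n) ->
  typ_t G' (lift_t c M) e D.
Proof.
  intros H.
  apply (typ_t_mut Lt
    (fun G M e D _ => forall c G', (forall n, G' (shift c n) = G n) -> typ_t G' (lift_t c M) e D)
    (fun G C l D _ => forall c G', (forall n, G' (shift c n) = G n) -> typ_c G' (lift_c c C) l D));
  intros; simpl; eauto using typ_t, typ_c.
  - rewrite <- H0. unfold shift. destruct (x <? c); constructor.
  - constructor. apply H0. intros [|n]; simpl. reflexivity. rewrite shift_S. simpl. auto.
Qed.

Lemma typ_liftn {Lt : complete_lattice} (G : basis Lt) M e D :
  typ_t G M e D -> forall c D', (forall n, D' (shift c n) = D n) ->
  typ_t G (liftn_t c M) e D'.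
Proof.
  intros H.
  apply (typ_t_mut Lt
    (fun G M e D _ => forall c D', (forall n, D' (shift c n) = D n) -> typ_t G (liftn_t c M) e D')
    (fun G C l D _ => forall c D', (forall n, D' (shift c n) = D n) -> typ_c G (liftn_c c C) l D'));
  intros; simpl; eauto using typ_t, typ_c.
  - econstructor. apply H0. intros [|n]; simpl. reflexivity. rewrite shift_S. simpl. auto.
  - rewrite <- (H1 a). unfold shift. constructor. auto.
Qed.

Lemma typ_basis_le {Lt : complete_lattice} (G : basis Lt) M e D :
  typ_t G M e D -> forall G', (forall n, leD (G' n) (G n)) -> typ_t G' M e D.
Proof.
  intros H.
  apply (typ_t_mut Lt
    (fun G M e D _ => forall G', (forall n, leD (G' n) (G n)) -> typ_t G' M e D)
    (fun G C l D _ => forall G', (forall n, leD (G' n) (G n)) -> typ_c G' C l D));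
  intros; simpl; eauto using typ_t, typ_c.
  - constructor. apply H0. intros [|n]; simpl; auto. apply leD_refl.
Qed.

Lemma typ_ctx_le {Lt : complete_lattice} (G : basis Lt) M e D :
  typ_t G M e D -> forall D', (forall n, leC (D' n) (D n)) -> typ_t G M e D'.
Proof.
  intros H.
  apply (typ_t_mut Lt
    (fun G M e D _ => forall D', (forall n, leC (D' n) (D n)) -> typ_t G M e D')
    (fun G C l D _ => forall D', (forall n, leC (D' n) (D n)) -> typ_c G C l D'));
  intros; simpl; eauto using typ_t, typ_c.
  - econstructor. apply H0. intros [|n]; simpl; auto. apply leC_refl.
  - eapply tc_le. constructor. eauto. apply leC_prod. apply leD_refl. auto.
Qed.

Lemma typ_subst {Lt : complete_lattice} (G : basis Lt) M e D :
  typ_t G M e D -> forall k G' N d,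
  (forall n, n < k -> G n = G' n) -> G k = d -> (forall n, k < n -> G n = G' (pred n)) ->
  typ_t G' N d D -> typ_t G' (subst_t k N M) e D.
Proof.
  intros H.
  apply (typ_t_mut Lt
    (fun G M e D _ => forall k G' N d,
      (forall n, n < k -> G n = G' n) -> G k = d -> (forall n, k < n -> G n = G' (pred n)) ->
      typ_t G' N d D -> typ_t G' (subst_t k N M) e D)
    (fun G C l D _ => forall k G' N d,
      (forall n, n < k -> G n = G' n) -> G k = d -> (forall n, k < n -> G n = G' (pred n)) ->
      typ_t G' N d D -> typ_c G' (subst_c k N C) l D));
  intros; simpl; eauto using typ_t, typ_c.
  - destruct (Nat.ltb_spec x k).
    + rewrite H0 by auto. constructor.
    + destruct (Nat.eqb_spec x k).
      * subst. auto.
      * rewrite H2 by lia. constructor.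
  - constructor. eapply H0.
    + intros [|n] Hn; simpl; auto. apply H1. lia.
    + simpl. eauto.
    + intros [|n] Hn. lia. simpl. destruct n. lia. rewrite H3 by lia. reflexivity.
    + eapply typ_lift; eauto; intros n; reflexivity.
  - econstructor. eapply H0; eauto. eapply typ_liftn; eauto; intros n; reflexivity.
Qed.

Definition ridx (k a n : nat) := if n <? k then n else if n =? k then a else pred n.

Lemma ridx_S k a m : ridx (S k) (S a) (S m) = S (ridx k a m).
Proof.
  unfold ridx. destruct (Nat.ltb_spec m k); destruct (Nat.ltb_spec (S m) (S k)); try lia; auto.
  all: destruct (Nat.eqb_spec m k); destruct (Nat.eqb_spec (S m) (S k)); try lia; auto.
  all: destruct m; [lia|reflexivity].
Qed.

Lemma typ_ren {Lt : complete_lattice} (G : basis Lt) M e D :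
  typ_t G M e D -> forall k a D', (forall n, D' (ridx k a n) = D n) ->
  typ_t G (ren_t k a M) e D'.
Proof.
  intros H.
  apply (typ_t_mut Lt
    (fun G M e D _ => forall k a D', (forall n, D' (ridx k a n) = D n) -> typ_t G (ren_t k a M) e D')
    (fun G C l D _ => forall k a D', (forall n, D' (ridx k a n) = D n) -> typ_c G (ren_c k a C) l D'));
  intros; simpl; eauto using typ_t, typ_c.
  - econstructor. apply H0. intros [|n]; simpl. reflexivity. rewrite ridx_S. simpl. auto.
  - rewrite <- (H1 a). unfold ridx. constructor. auto.
Qed.

Lemma typ_var_ctx {Lt : complete_lattice} (G : basis Lt) n e D D' :
  typ_t G (Var n) e D -> typ_t G (Var n) e D'.
Proof.
  remember (Var n) as x. induction 1; subst; try discriminate; eauto using typ_t.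
  all: inversion Heqx; subst; constructor.
Qed.
Lemma tg_up {Lt : complete_lattice} (G : basis Lt) M k r r' D :
  typ_t G M (DArr k r) D -> leR r r' -> typ_t G M (DArr k r') D.
Proof. intros H H'. eapply t_le; eauto. apply leD_arr; auto. apply leC_refl. Qed.

Lemma tg_om {Lt : complete_lattice} (G : basis Lt) M k r D :
  leR OmR r -> typ_t G M (DArr k r) D.
Proof.
  intros H. eapply t_le. apply t_om. eapply leD_trans. apply leD_omarr.
  apply leD_arr; auto. apply leC_om.
Qed.

Lemma tg_and {Lt : complete_lattice} (G : basis Lt) M k r1 r2 D :
  typ_t G M (DArr k r1) D -> typ_t G M (DArr k r2) D -> typ_t G M (DArr k (AndR r1 r2)) D.
Proof. intros H1 H2. eapply t_le. apply (t_and _ _ _ _ _ _ H1 H2). apply leD_arrand. Qed.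

Lemma tg_and_inv {Lt : complete_lattice} (G : basis Lt) M k e1 e2 c r D :
  Arr (AndD e1 e2) c r ->
  (forall r1, Arr e1 c r1 -> typ_t G M (DArr k r1) D) ->
  (forall r2, Arr e2 c r2 -> typ_t G M (DArr k r2) D) ->
  typ_t G M (DArr k r) D.
Proof.
  intros H H1 H2. apply Arr_and_inv in H. destruct H as [H|[r1 [r2 [? [? ?]]]]].
  - apply tg_om; auto.
  - eapply tg_up; [|eauto]. apply tg_and; auto.
Qed.

Lemma gen_lam {Lt : complete_lattice} (G : basis Lt) M e D :
  typ_t G (Lam M) e D -> forall d k r, Arr e (Prod d k) r -> typ_t (scons d G) M (DArr k r) D.
Proof.
  remember (Lam M) as x. induction 1; subst; try discriminate; intros d0 k0 r0 HA.
  - inversion Heqx; subst. apply Arr_arr_inv in HA. destruct HA as [[H1 H2]|H1].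
    + apply leC_prod_inv in H1 as [H1 H3]. eapply tg_up; [|eauto].
      eapply t_le. eapply typ_basis_le; eauto.
      intros [|n]; simpl; auto. apply leD_refl.
      apply leD_arr; auto. apply leR_refl.
    + apply tg_om; auto.
  - eapply tg_and_inv; eauto.
  - apply tg_om. eapply Arr_om_inv; eauto.
  - destruct (leD_inv _ _ H0 (Prod d0 k0) r0) as [r' [? ?]].
    { exists r0. split; auto. apply leR_refl. }
    eapply tg_up; eauto.
Qed.

Definition cmdgood {Lt : complete_lattice} (G : basis Lt) (C : cmd) (D : context Lt) r :=
  match C with Cmd b M => typ_t G M (DArr (D b) r) D end.

Lemma cmd_gen {Lt : complete_lattice} (G : basis Lt) b M l D :
  typ_c G (Cmd b M) l D -> exists d0, typ_t G M d0 D /\ leC (Prod d0 (D b)) l.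
Proof.
  remember (Cmd b M) as x. induction 1; subst; try discriminate.
  - inversion Heqx; subst. exists d. split; auto. apply leC_refl.
  - destruct (IHtyp_c1 eq_refl) as [d1 [? ?]]. destruct (IHtyp_c2 eq_refl) as [d2 [? ?]].
    exists (AndD d1 d2). split. apply t_and; auto. apply leC_glb.
    + eapply leC_trans; [|eauto]. apply leC_prod. apply leD_andl. apply leC_refl.
    + eapply leC_trans; [|eauto]. apply leC_prod. apply leD_andr. apply leC_refl.
  - exists OmD. split. apply t_om. apply leC_om.
  - destruct (IHtyp_c eq_refl) as [d1 [? ?]]. exists d1. split; auto. eapply leC_trans; eauto.
Qed.

Lemma cmdgood_of_typ {Lt : complete_lattice} (G : basis Lt) C k r D :
  typ_c G C (Prod (DArr k r) k) D -> cmdgood G C D r.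
Proof.
  destruct C as [b M]. intros H. apply cmd_gen in H as [d0 [H1 H2]].
  apply leC_prod_inv in H2 as [H2 H3]. simpl. eapply t_le; eauto.
  eapply leD_trans; eauto. apply leD_arr; auto. apply leR_refl.
Qed.

Lemma mu_intro {Lt : complete_lattice} (G : basis Lt) C k r D :
  cmdgood G C (scons k D) r -> typ_t G (Mu C) (DArr k r) D.
Proof.
  destruct C as [b M]. simpl. intros H. eapply t_mu. apply t_cmd. eauto.
Qed.

Lemma cmdgood_up {Lt : complete_lattice} (G : basis Lt) C D1 D2 r r' :
  cmdgood G C D1 r -> (forall n, leC (D2 n) (D1 n)) -> leR r r' -> cmdgood G C D2 r'.
Proof.
  destruct C as [b M]; simpl. intros H H1 H2. eapply t_le.
  eapply typ_ctx_le; eauto. apply leD_arr; auto.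
Qed.

Lemma gen_mu {Lt : complete_lattice} (G : basis Lt) C e D :
  typ_t G (Mu C) e D -> forall c r, Arr e c r -> cmdgood G C (scons c D) r.
Proof.
  remember (Mu C) as x. induction 1; subst; try discriminate; intros c0 r0 HA;
  destruct C as [b M0]; simpl.
  - inversion Heqx; subst. apply cmdgood_of_typ in H. apply Arr_arr_inv in HA.
    destruct HA as [[H1 H2]|H1].
    + apply (cmdgood_up _ _ _ _ _ _ H); auto. intros [|n]; simpl; auto. apply leC_refl.
    + apply tg_om; auto.
  - eapply tg_and_inv; eauto; intros; [apply IHtyp_t1|apply IHtyp_t2]; auto.
  - apply tg_om. eapply Arr_om_inv; eauto.
  - destruct (leD_inv _ _ H0 c0 r0) as [r' [? ?]].
    { exists r0. split; auto. apply leR_refl. }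
    eapply tg_up; eauto. apply (IHtyp_t eq_refl); auto.
Qed.
Fixpoint term_ind' (P : term -> Prop) (HV : forall n, P (Var n))
  (HL : forall M, P M -> P (Lam M)) (HA : forall M N, P M -> P N -> P (App M N))
  (HM : forall a M, P M -> P (Mu (Cmd a M))) (M : term) {struct M} : P M :=
  match M with
  | Var n => HV n
  | Lam M1 => HL M1 (term_ind' P HV HL HA HM M1)
  | App M1 M2 => HA M1 M2 (term_ind' P HV HL HA HM M1) (term_ind' P HV HL HA HM M2)
  | Mu (Cmd a M1) => HM a M1 (term_ind' P HV HL HA HM M1)
  end.

Definition SS {Lt : complete_lattice} (M : term) :=
  forall (G : basis Lt) (D0 D1 : context Lt) k L d c e,
  D0 k = Prod d c -> D1 k = c -> (forall n, n <> k -> D1 n = D0 n) ->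
  typ_t G L d D1 -> typ_t G M e D0 -> typ_t G (ssubst_t k L M) e D1.

Lemma ssubst_cmd {Lt : complete_lattice} b M0 (G : basis Lt) D0 D1 k L d c r :
  SS (Lt:=Lt) M0 ->
  D0 k = Prod d c -> D1 k = c -> (forall n, n <> k -> D1 n = D0 n) ->
  typ_t G L d D1 -> cmdgood G (Cmd b M0) D0 r -> cmdgood G (ssubst_c k L (Cmd b M0)) D1 r.
Proof.
  intros IH H0 H1 H2 HL HC. simpl in *. destruct (Nat.eqb_spec b k).
  - subst b. simpl. rewrite H1. eapply t_app; [|eauto]. rewrite H0 in HC. eapply IH; eauto.
  - simpl. rewrite H2 by auto. eapply IH; eauto.
Qed.

Lemma typ_ssubst {Lt : complete_lattice} M : SS (Lt:=Lt) M.
Proof.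
  induction M using term_ind'; unfold SS; intros G D0 D1 k L d c e H0 H1 H2 HL HM; simpl.
  - eapply typ_var_ctx; eauto.
  - remember (Lam M) as x. induction HM; subst; try discriminate; eauto using typ_t.
    inversion Heqx; subst. constructor. eapply IHM; eauto.
    eapply typ_lift; eauto; intros n; reflexivity.
  - remember (App M1 M2) as x. induction HM; subst; try discriminate; eauto using typ_t.
    inversion Heqx; subst. econstructor; [eapply IHM1|eapply IHM2]; eauto.
  - remember (Mu (Cmd a M)) as x. induction HM; subst; try discriminate; eauto using typ_t.
    inversion Heqx; subst. apply cmdgood_of_typ in H. apply mu_intro.
    eapply (ssubst_cmd a M G (scons k0 D) (scons k0 D1) (S k)); eauto.
    + intros [|n] Hn; simpl; auto.
    + eapply typ_liftn; eauto; intros n; reflexivity.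
Qed.

Scheme red_t_mut := Induction for red_t Sort Prop
  with red_c_mut := Induction for red_c Sort Prop.

Lemma sr {Lt : complete_lattice} M N :
  red_t M N -> forall (G : basis Lt) D e, typ_t G M e D -> typ_t G N e D.
Proof.
  revert M N.
  apply (red_t_mut
    (fun M N _ => forall (G : basis Lt) D e, typ_t G M e D -> typ_t G N e D)
    (fun C C' _ => forall (G : basis Lt) D r, cmdgood G C D r -> cmdgood G C' D r));
  intros.
  -
    remember (App (Lam M) N) as x. induction H; subst; try discriminate; eauto using typ_t.
    inversion Heqx; subst.
    eapply gen_lam in H; [|apply A_arr; apply leC_refl].
    eapply typ_subst; eauto.
    all: first [ intros [|n] Hn; [lia|reflexivity] | intros n Hn; lia | reflexivity ].
  -
    remember (App (Mu C) N) as x. induction H; subst; try discriminate; eauto using typ_t.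
    inversion Heqx; subst.
    eapply gen_mu in H; [|apply A_arr; apply leC_refl].
    apply mu_intro. destruct C as [b M0].
    apply (ssubst_cmd b M0 G (scons (Prod d k) D) (scons k D) 0 (liftn_t 0 N) d k r).
    + apply typ_ssubst.
    + reflexivity.
    + reflexivity.
    + intros [|n] Hn; simpl; auto. lia.
    + eapply typ_liftn; eauto; intros n; reflexivity.
    + exact H.
  - remember (Lam M) as x. induction H0; subst; try discriminate; eauto using typ_t.
    inversion Heqx; subst. constructor; auto.
  - remember (App M N) as x. induction H0; subst; try discriminate; eauto using typ_t.
    inversion Heqx; subst. econstructor; eauto.
  - remember (App M N) as x. induction H0; subst; try discriminate; eauto using typ_t.
    inversion Heqx; subst. econstructor; eauto.
  - remember (Mu C) as x. induction H0; subst; try discriminate; eauto using typ_t.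
    inversion Heqx; subst. apply cmdgood_of_typ in H0. apply mu_intro. auto.
  -
    simpl in H. eapply gen_mu in H; [|apply A_arr; apply leC_refl].
    destruct C as [b M]. simpl in *.
    assert (H' := typ_ren _ _ _ _ H 0 a D (fun n => match n with 0 => eq_refl | S _ => eq_refl end)).
    destruct b; exact H'.
  - simpl in *. auto.
Qed.

Local Arguments leR : clear implicits. Local Arguments leD : clear implicits.
Local Arguments leC : clear implicits.
Local Arguments typ_t : clear implicits. Local Arguments typ_c : clear implicits.

Theorem theorem5p4 :
  forall (L : complete_lattice), omega_algebraic L ->
  forall (G : basis L) (D : context L) (M N : term) (d : dtype L),
    finite_basis G -> finite_context D ->
    red_t M N -> typ_t L G M d D -> typ_t L G N d D.
Proof.
  intros L _ G D M N d _ _ H1 H2. eapply (sr M N); eauto.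
Qed.
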